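(* Let $X$ be a set and $d,\rho$ metrics on $X$ such that $d$ is quasisymmetric to $\rho$, and assume $(X,d)$ is uniformly shrinking. Then (1) $(X,\rho)$ is uniformly shrinking; (2) if a measure $\mu$ on $X$ satisfies $(\mathrm{VD})_d$, then it also satisfies $(\mathrm{VD})_\rho$.
   Context: $d$ is quasisymmetric to $\rho$ if there is a homeomorphism $\theta$ of $[0,\infty)$ with $\rho(x,y)/\rho(x,z)\le\theta(d(x,y)/d(x,z))$ for all $x\ne z$. A metric space $(X,d)$ is uniformly shrinking if there is $\alpha\in(0,1)$ such that for all $x\in X$ and $r>0$ with $B_d(x,r)\ne X$ and $B_d(x,r)\ne\{x\}$, one has $B_d(x,r)\setminus B_d(x,\alpha r)\ne\emptyset$ (open balls). $\mu$ satisfies $(\mathrm{VD})_d$ if there is $C>0$ with $\mu(B_d(x,2r))\le C\mu(B_d(x,r))$ for all $x\in X$, $r>0$. *)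

(* Defs.v *)
From HB Require Import structures.
From mathcomp Require Import all_boot all_order all_algebra.
From mathcomp Require Import all_classical all_reals all_analysis.
Set Implicit Arguments. Unset Strict Implicit. Unset Printing Implicit Defensive.
Import Order.TTheory GRing.Theory Num.Theory numFieldNormedType.Exports.
Local Open Scope classical_set_scope.
Local Open Scope ring_scope.

Section Defs.
Variables (R : realType) (X : Type).

Definition is_metric (d : X -> X -> R) : Prop :=
  [/\ forall x y, 0 <= d x y,
      forall x y, d x y = 0 <-> x = y,
      forall x y, d x y = d y x &
      forall x y z, d x z <= d x y + d y z].

Definition oball (d : X -> X -> R) (x : X) (r : R) : set X :=
  [set y | d x y < r].

Definition homeo_halfline (theta : R -> R) : Prop :=
  exists theta' : R -> R,
    [/\ forall t, 0 <= t -> 0 <= theta t,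
        forall t, 0 <= t -> 0 <= theta' t,
        forall t, 0 <= t -> theta' (theta t) = t,
        forall t, 0 <= t -> theta (theta' t) = t &
        {within [set t : R | 0 <= t], continuous theta} /\
        {within [set t : R | 0 <= t], continuous theta'}].

Definition quasisymmetric (d rho : X -> X -> R) : Prop :=
  exists theta : R -> R, homeo_halfline theta /\
    forall x y z, x <> z -> rho x y / rho x z <= theta (d x y / d x z).

Definition uniformly_shrinking (d : X -> X -> R) : Prop :=
  exists alpha : R, 0 < alpha < 1 /\
    forall x r, 0 < r -> oball d x r <> setT -> oball d x r <> [set x] ->
      exists y, oball d x r y /\ ~ oball d x (alpha * r) y.

End Defs.

(** Every d-open set is measurable (i.e. the measure is defined on
    (at least) the Borel sets of (X,d)). *)
Definition d_open_measurable (R : realType) (dsp : measure_display) (Y : measurableType dsp)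
  (d : Y -> Y -> R) : Prop :=
  forall A : set Y, (forall x, A x -> exists r, 0 < r /\ oball d x r `<=` A) ->
    measurable A.

Definition VD (R : realType) (dsp : measure_display) (Y : measurableType dsp)
  (d : Y -> Y -> R) (mu : {measure set Y -> \bar R}) : Prop :=
  exists C : R, 0 < C /\ forall x r, 0 < r ->
    (mu (oball d x (2 * r)) <= C%:E * mu (oball d x r))%E.

(* Main.v *)
Require Import Defs.
From HB Require Import structures.
From mathcomp Require Import all_boot all_order all_algebra.
From mathcomp Require Import all_classical all_reals all_analysis.
From mathcomp Require Import ring lra.
Import Order.TTheory GRing.Theory Num.Theory numFieldNormedType.Exports.
Import Num.Def.
Local Open Scope classical_set_scope.
Local Open Scope ring_scope.

Section Theta.
Variables (R : realType) (th th' : R -> R).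
Hypotheses (h1 : forall t, 0 <= t -> 0 <= th t) (h2 : forall t, 0 <= t -> 0 <= th' t)
  (h3 : forall t, 0 <= t -> th' (th t) = t) (h4 : forall t, 0 <= t -> th (th' t) = t)
  (hc : {within [set t : R | 0 <= t], continuous th}).

Lemma th_inj p q : 0 <= p -> 0 <= q -> th p = th q -> p = q.
Proof. by move=> hp hq e; rewrite -(h3 p hp) -(h3 q hq) e. Qed.

Lemma cont_ab a b : 0 <= a -> {within `[a, b], continuous th}.
Proof.
move=> ha; apply: (continuous_subspaceW _ hc) => t /=.
by rewrite in_itv /= => /andP[+ _]; exact: le_trans.
Qed.

Lemma th0 : th 0 = 0.
Proof.
have ha := h1 _ (lexx 0); set a := th 0 in ha *.
apply/eqP; rewrite eq_le ha andbT; apply/negP => /negP; rewrite -ltNge => a0.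
have hb := h2 _ (lexx 0); have tb := h4 _ (lexx 0).
have ha1 : 0 <= a + 1 by rewrite addr_ge0.
have hc' := h2 _ ha1; have tc := h4 _ ha1.
set b := th' 0 in hb tb; set c := th' (a + 1) in hc' tc.
have key u v : 0 <= u -> u <= v -> th u + th v = a + 1 -> th u * th v = 0 -> False.
  move=> hu uv e0 e1.
  have hv := le_trans hu uv.
  have [|p pin tp] := @IVT R th u v a uv (cont_ab u v hu).
    have /orP[/eqP tu0|/eqP tv0] : (th u == 0) || (th v == 0) by rewrite -mulf_eq0 e1.
      by move: e0; rewrite tu0 add0r => ->; rewrite ge_min le_max ha lerDl ler01 orbT.
    by move: e0; rewrite tv0 addr0 => ->; rewrite ge_min le_max ha lerDl ler01 orbT.
  move: pin; rewrite in_itv /= => /andP[up pv].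
  have p0 : p = 0 by apply: th_inj => //; exact: le_trans up.
  subst p.
  have u0 : u = 0 by apply/eqP; rewrite eq_le up hu.
  subst u.
  have /orP[/eqP tu0|/eqP tv0] : (th 0 == 0) || (th v == 0) by rewrite -mulf_eq0 e1.
    by move: a0; rewrite /a tu0 ltxx.
  move: e0; rewrite tv0 addr0 -/a => /eqP; rewrite -subr_eq0 opprD addrA subrr add0r oppr_eq0 oner_eq0 //.
case: (leP b c) => bc.
  by apply: (key b c) => //; rewrite ?tb ?tc ?add0r ?mul0r.
by apply: (key c b hc' (ltW bc)); rewrite ?tb ?tc ?addr0 ?mulr0.
Qed.
Lemma th_small eta : 0 < eta -> exists e, 0 < e /\ forall t, 0 <= t <= e -> th t < eta.
Proof.
move=> eta0.
have he2 : 0 <= eta / 2 by rewrite divr_ge0 // ltW.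
have he := h2 _ he2; have te := h4 _ he2.
set e := th' (eta / 2) in he te.
have e0 : 0 < e.
  rewrite lt_def he andbT; apply/eqP => e0.
  by move: te; rewrite e0 th0 => /eqP; rewrite eq_sym mulf_eq0 invr_eq0 pnatr_eq0 orbF gt_eqF.
exists e; split => // t /andP[t0 te'].
rewrite ltNge; apply/negP => tt.
have [|p pin tp] := @IVT R th 0 t (eta / 2) t0 (cont_ab 0 t (lexx 0)).
  rewrite th0 ge_min le_max he2 /=; apply/orP; right.
  by apply: le_trans tt; rewrite ler_pdivrMr // ler_peMr ?ler1n // ltW.
move: pin; rewrite in_itv /= => /andP[p0 pt].
have pe : p = e by apply: th_inj => //; rewrite tp te.
have et : t = e by apply/eqP; rewrite eq_le te' -pe pt.
by move: tt; rewrite et te => tt; lra.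
Qed.

Lemma th_bnd c : 0 <= c -> exists K, 0 <= K /\ forall t, 0 <= t <= c -> th t <= K.
Proof.
move=> c0; have [m min hm] := @EVT_max R th 0 c c0 (cont_ab 0 c (lexx 0)).
move: min; rewrite in_itv /= => /andP[m0 _].
exists (th m); split; first exact: h1.
by move=> t tc; apply: hm; rewrite in_itv.
Qed.
End Theta.

Lemma inf_help (R : realType) (T : Type) (f : T -> R) (P : set T) z0 : P z0 ->
  (forall z, P z -> 0 <= f z) ->
  [/\ forall z, P z -> inf (f @` P) <= f z,
      forall l, (forall z, P z -> l <= f z) -> l <= inf (f @` P) &
      0 < inf (f @` P) -> exists z, P z /\ f z < 2 * inf (f @` P)].
Proof.
move=> Pz0 f0.
have ne : (f @` P) !=set0 by exists (f z0), z0.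
have hl : has_lbound (f @` P) by exists 0 => _ [z Pz <-]; exact: f0.
split.
- by move=> z Pz; apply: ge_inf => //; exists z.
- by move=> l hl'; apply: lb_le_inf => // _ [z Pz <-]; exact: hl'.
- move=> s0; have [_ [z Pz <-] lt] := inf_adherent s0 (conj ne hl).
  by exists z; split => //; lra.
Qed.

Section Metric.
Variables (R : realType) (dsp : measure_display) (X : measurableType dsp)
  (d rho : X -> X -> R) (th : R -> R).
Hypotheses (dpos : forall x y, 0 <= d x y) (d0 : forall x y, d x y = 0 <-> x = y)
  (dsym : forall x y, d x y = d y x) (dtri : forall x y z, d x z <= d x y + d y z)
  (rpos : forall x y, 0 <= rho x y) (r0 : forall x y, rho x y = 0 <-> x = y)
  (rsym : forall x y, rho x y = rho y x) (rtri : forall x y z, rho x z <= rho x y + rho y z)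
  (qs : forall x y z, x <> z -> rho x y / rho x z <= th (d x y / d x z))
  (hsmall : forall eta, 0 < eta -> exists e, 0 < e /\ forall t, 0 <= t <= e -> th t < eta)
  (hbnd : forall c, 0 <= c -> exists K, 0 <= K /\ forall t, 0 <= t <= c -> th t <= K).

Lemma dpos' {x y} : x <> y -> 0 < d x y.
Proof. by move=> xy; rewrite lt_def dpos andbT; apply/eqP => /d0. Qed.

Lemma rpos' {x y} : x <> y -> 0 < rho x y.
Proof. by move=> xy; rewrite lt_def rpos andbT; apply/eqP => /r0. Qed.

Lemma dxx x : d x x = 0. Proof. exact: (d0 x x).2. Qed.
Lemma rxx x : rho x x = 0. Proof. exact: (r0 x x).2. Qed.

Lemma qs' x y z : x <> z -> rho x y <= rho x z * th (d x y / d x z).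
Proof. by move=> xz; have := qs x y z xz; rewrite ler_pdivrMr ?rpos' // mulrC. Qed.

Lemma rho_cont y eta : 0 < eta -> exists2 del, 0 < del & forall w, d y w < del -> rho y w < eta.
Proof.
move=> eta0; case: (pselect (exists z, z <> y)) => [[z zy]|nz].
  have rz := rpos' (nesym zy); have dz := dpos' (nesym zy).
  have [e [e0 he]] := hsmall _ (divr_gt0 eta0 rz).
  exists (e * d y z); first exact: mulr_gt0.
  move=> w dw; case: (pselect (w = y)) => [->|wy]; first by rewrite rxx.
  have t0 : 0 <= d y w / d y z by rewrite divr_ge0.
  have te : d y w / d y z <= e by rewrite ler_pdivrMr // ltW.
  have := he _ (introT andP (conj t0 te)); rewrite ltr_pdivlMr // => h.
  apply: le_lt_trans (qs' y w z (nesym zy)) _; by rewrite mulrC.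
exists 1 => // w _.
have -> : w = y by apply: contrapT => wy; apply: nz; exists w.
by rewrite rxx.
Qed.

Lemma oball_d_open x s y : oball d x s y -> exists r, 0 < r /\ oball d y r `<=` oball d x s.
Proof.
rewrite /oball /= => h; exists (s - d x y); split; first by rewrite subr_gt0.
move=> w /= hw; have := dtri x y w; lra.
Qed.

Lemma oball_rho_open x s y : oball rho x s y -> exists r, 0 < r /\ oball d y r `<=` oball rho x s.
Proof.
rewrite /oball /= => h; have sp : 0 < s - rho x y by rewrite subr_gt0.
have [del del0 hdel] := rho_cont y _ sp.
exists del; split => // w /= /hdel hw; have := rtri x y w; lra.
Qed.

Lemma part1 : uniformly_shrinking d -> uniformly_shrinking rho.
Proof.
case=> al [/andP[al0 al1] shr].
have c0 : 0 <= 2 / al by rewrite divr_ge0 // ltW.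
have [K [K0 hK]] := hbnd _ c0.
have K2 : 0 < K + 2 by lra.
exists (1 / (K + 2)); split.
  apply/andP; split; first by rewrite divr_gt0.
  by rewrite ltr_pdivrMr //; lra.
move=> x r rr hT hx.
apply: contrapT => H.
have Hin y : rho x y < r -> rho x y * (K + 2) < r.
  move=> ry; suff : rho x y < 1 / (K + 2) * r by rewrite mul1r mulrC ltr_pdivlMr.
  by apply: contrapT => ny; apply: H; exists y; split.
have [z hz] : exists z, ~ (rho x z < r).
  apply: contrapT => nz; apply: hT; apply/seteqP; split => // y _.
  by apply: contrapT => ny; apply: nz; exists y.
have {}hz : r <= rho x z by rewrite leNgt; apply/negP.
have [w [rw wx]] : exists w, rho x w < r /\ w <> x.
  apply: contrapT => nw; apply: hx; apply/seteqP; split => y /=.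
    by move=> ry; apply: contrapT => yx; apply: nw; exists y.
  by move=> ->; rewrite /oball /= rxx.
have C y z' : y <> x -> rho x y < r -> r <= rho x z' -> 2 / al * d x y < d x z'.
  move=> yx ry rz; rewrite ltNge; apply/negP => hle.
  have dy : 0 < d x y := dpos' (nesym yx).
  have t0 : 0 <= d x z' / d x y by rewrite divr_ge0.
  have tc : d x z' / d x y <= 2 / al by rewrite ler_pdivrMr.
  have hth := hK _ (introT andP (conj t0 tc)).
  have q := qs' x z' y (nesym yx).
  have q2 : rho x y * th (d x z' / d x y) <= rho x y * K by rewrite ler_wpM2l.
  have := Hin y ry; have := rpos x y; nra.
have [tlb tglb tadh] := @inf_help R X (d x) [set z | r <= rho x z] z hz (fun z _ => dpos x z).
set t := inf _ in tlb tglb tadh.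
have dw : 0 < d x w := dpos' (nesym wx).
have tw : 2 / al * d x w <= t by apply: tglb => z' hz'; apply: ltW; apply: C.
have a2 : 2 <= 2 / al by rewrite ler_pdivlMr //; lra.
have wt : d x w < t by nra.
have t0 : 0 < t by lra.
have hT' : oball d x t <> setT.
  move=> e; have : oball d x t z by rewrite e.
  by rewrite /oball /= ltNge tlb.
have hx' : oball d x t <> [set x].
  move=> e; have : oball d x t w by rewrite /oball /=.
  by rewrite e.
have [y [ydt nyt]] := shr x t t0 hT' hx'.
move: ydt nyt; rewrite /oball /= => ydt nyt.
have {}nyt : al * t <= d x y by rewrite leNgt; apply/negP.
have yx : y <> x.
  by move=> yx; move: nyt; rewrite yx dxx; have := mulr_gt0 al0 t0; lra.
have ry : rho x y < r.
  rewrite ltNge; apply/negP => ry; have := tlb y ry; lra.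
have := tglb (2 / al * d x y) (fun z' hz' => ltW (C y z' yx ry hz')).
have : 2 / al * (al * t) <= 2 / al * d x y by rewrite ler_wpM2l.
rewrite mulrA divfK ?gt_eqF //; lra.
Qed.
Lemma part2 (mu : {measure set X -> \bar R}) : d_open_measurable d -> VD d mu -> VD rho mu.
Proof.
move=> hm [C [C0 hC]].
have h2 : 0 < 1 / 2 :> R by rewrite divr_gt0.
have [e [e0 he]] := hsmall _ h2.
set N := (Num.truncn (2 / e)).+1.
have hN : 2 / e <= 2 ^+ N.
  apply: le_trans (ltW (truncnS_gt _)) _.
  by rewrite -natrX ler_nat ltnW // ltn_expl.
exists (maxr (C ^+ N) 1); split; first by rewrite lt_max ltr01 orbT.
move=> x r rr.
have mballd s : measurable (oball d x s) by apply: hm => y; apply: oball_d_open.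
have mballr s : measurable (oball rho x s) by apply: hm => y; apply: oball_rho_open.
case: (pselect (exists z, r <= rho x z)) => [[z0 hz0]|nz]; last first.
  have -> : oball rho x r = setT.
    apply/seteqP; split => // y _; rewrite /oball /= ltNge; apply/negP => h; apply: nz; by exists y.
  apply: (@le_trans _ _ (mu setT)).
    by apply: (le_measure mu); rewrite ?inE.
  by apply: lee_pemull; rewrite ?lee_fin ?le_max ?lexx ?orbT.
have [del del0 hdel] := rho_cont x _ rr.
have [slb sglb sadh] := @inf_help R X (d x) [set z | r <= rho x z] z0 hz0 (fun z _ => dpos x z).
set s := inf _ in slb sglb sadh.
have s0 : 0 < s.
  apply: lt_le_trans del0 (sglb del _) => z hz; rewrite leNgt; apply/negP => /hdel.
  by rewrite ltNge hz.
have [z [hz dz]] := sadh s0.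
have sub1 : oball d x s `<=` oball rho x r.
  move=> w; rewrite /oball /= => dw; rewrite ltNge; apply/negP => rw.
  by move: (slb w rw); rewrite leNgt dw.
set P := 2 ^+ N in hN *.
have P0 : 0 < P by rewrite exprn_gt0.
have sub2 : oball rho x (2 * r) `<=` oball d x (P * s).
  move=> y; rewrite /oball /= => ry; rewrite ltNge; apply/negP => hy.
  have dy0 : 0 < d x y by apply: lt_le_trans hy; rewrite mulr_gt0.
  have yx : x <> y by move=> exy; move: dy0; rewrite -exy dxx ltxx.
  have t0 : 0 <= d x z / d x y by rewrite divr_ge0.
  have hN' : 2 <= P * e by rewrite -ler_pdivrMr.
  have te : d x z / d x y <= e by rewrite ler_pdivrMr //; nra.
  have hth := he _ (introT andP (conj t0 te)).
  have q := qs' x z y yx.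
  have q2 : rho x y * th (d x z / d x y) <= rho x y * (1 / 2) by rewrite ler_wpM2l // ltW.
  have hz' : r <= rho x z := hz; lra.
have iter n : (mu (oball d x (2 ^+ n * s)) <= (C ^+ n)%:E * mu (oball d x s))%E.
  elim: n => [|n IH]; first by rewrite expr0 !mul1r mul1e.
  rewrite exprS -mulrA; apply: le_trans (hC _ _ _) _; first by rewrite mulr_gt0 // exprn_gt0.
  rewrite exprS EFinM -muleA; apply: lee_wpmul2l; first by rewrite lee_fin ltW.
  exact: IH.
have A1 : (mu (oball rho x (2 * r)) <= mu (oball d x (P * s)))%E.
  by apply: (le_measure mu); rewrite ?inE.
apply: (le_trans A1); apply: le_trans (iter N) _.
have A2 : ((C ^+ N)%:E * mu (oball d x s) <= (C ^+ N)%:E * mu (oball rho x r))%E.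
  apply: lee_wpmul2l; first by rewrite lee_fin exprn_ge0 // ltW.
  by apply: (le_measure mu); rewrite ?inE.
apply: (le_trans A2).
by apply: lee_wpmul2r; rewrite ?lee_fin ?le_max ?lexx.
Qed.
End Metric.

Theorem lemma6p1 (R : realType) (dsp : measure_display) (X : measurableType dsp)
  (d rho : X -> X -> R) :
  is_metric d -> is_metric rho -> quasisymmetric d rho ->
  uniformly_shrinking d ->
  uniformly_shrinking rho /\
  (forall mu : {measure set X -> \bar R},
     d_open_measurable d -> VD d mu -> VD rho mu).
Proof.
move=> [dpos d0 dsym dtri] [rpos r0 rsym rtri] [th [[th' [h1 h2 h3 h4 [hc _]]] hq]] hsh.
have hsmall := @th_small R th th' h1 h2 h3 h4 hc.
have hbnd := @th_bnd R th h1 hc.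
split; first exact: (@part1 R dsp X d rho th dpos d0 rpos r0 hq hbnd).
by move=> mu; apply: (@part2 R dsp X d rho th dpos d0 dtri rpos r0 rtri hq hsmall).
Qed.
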